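(* Let $\langle A, \leq, \otimes, \ominus, \mathbf{1}\rangle$ be a residuated partially ordered monoid with bottom element $\bot$, let $k\geq1$ and $a = a_1\ldots a_k$, $b = b_1\ldots b_k \in Lex_k(A)$. If $\delta(a,b) = \gamma(a,b) \leq k$ or $\delta(a,b) > \gamma(a,b)$, then the residuation $a \ominus_k b$ of $a$ by $b$ in $\langle Lex_k(A), \leq_k, \otimes^k, \mathbf{1}^k\rangle$ exists and equals $$(a_1 \ominus b_1) \ldots (a_{\gamma(a,b)} \ominus b_{\gamma(a,b)})\,\bot^{k-\gamma(a,b)},$$ that is, this tuple $r$ lies in $Lex_k(A)$ and for every $c \in Lex_k(A)$, $b \otimes^k c \leq_k a$ iff $c \leq_k r$.
   Context: A residuated partially ordered monoid $\langle A, \leq, \otimes, \ominus, \mathbf{1}\rangle$ consists of a partial order $\langle A,\leq\rangle$, a commutative monoid $\langle A,\otimes,\mathbf{1}\rangle$, and a binary operation $\ominus$ with $b \otimes c \leq a$ iff $c \leq a \ominus b$ for all $a,b,c\in A$. $a<b$ means $a\leq b$, $a\neq b$. $I(A) = \{c \in A \mid \forall a,b \in A.\ a \otimes c = b \otimes c \Rightarrow a = b\}$, $C(A)=A\setminus I(A)$. $Lex_k(A)\subseteq A^k$: $Lex_1(A) = A$, $Lex_{k+1}(A) = I(A)\, Lex_k(A) \cup C(A)\{\bot\}^k$ (concatenations of sequences; $\{\bot\}^k$ the singleton of $k$ copies of $\bot$). The order $\leq_k$: $\leq_1=\leq$, and for $k\geq2$, $a_1 \ldots a_k \leq_k b_1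 \ldots b_k$ iff $a_1 < b_1$, or $a_1 = b_1$ and $a_2 \ldots a_k \leq_{k-1} b_2 \ldots b_k$. $\otimes^k$ is componentwise, $\mathbf{1}^k=\mathbf{1}\ldots\mathbf{1}$; $\bot^n$ is the sequence of $n$ copies of $\bot$. For $a,b\in Lex_k(A)$: $\gamma(a,b) = \min\{ i \mid a_i \ominus b_i \in C(A)\}$ and $\delta(a,b) = \min\{ i \mid (a_i \ominus b_i) \otimes b_i < a_i\}$, each equal to $k+1$ if the set is empty. *)

(* Defs.v *)
From mathcomp Require Import all_boot.
Set Implicit Arguments. Unset Strict Implicit. Unset Printing Implicit Defensive.

Definition is_rpom (A : Type) (le : A -> A -> Prop) (mul res : A -> A -> A)
  (one : A) : Prop :=
  (forall x, le x x) /\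
  (forall x y, le x y -> le y x -> x = y) /\
  (forall x y z, le x y -> le y z -> le x z) /\
  (forall x y z, mul x (mul y z) = mul (mul x y) z) /\
  (forall x y, mul x y = mul y x) /\
  (forall x, mul one x = x) /\
  (forall a b c, le (mul b c) a <-> le c (res a b)).

Definition is_bottom (A : Type) (le : A -> A -> Prop) (bot : A) : Prop :=
  forall x, le bot x.

Section Lex.
Variables (A : Type) (le : A -> A -> Prop) (mul res : A -> A -> A) (bot : A).

Definition ltA (x y : A) : Prop := le x y /\ x <> y.

Definition Icanc (c : A) : Prop := forall a b, mul a c = mul b c -> a = b.
Definition Cnc (c : A) : Prop := ~ Icanc c.

(* Lex_k(A) as a predicate on sequences (Lex_0 is empty, unused) *)
Fixpoint Lex (k : nat) (s : seq A) : Prop :=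
  match k with
  | 0 => False
  | k'.+1 =>
    match k' with
    | 0 => exists a, s = [:: a]
    | _ => (exists c t, [/\ s = c :: t, Icanc c & Lex k' t])
           \/ (exists c, s = c :: nseq k' bot /\ Cnc c)
    end
  end.

Fixpoint lexle (k : nat) (s t : seq A) : Prop :=
  match k with
  | 0 => False
  | k'.+1 =>
    match s, t with
    | a :: s', b :: t' =>
      match k' with
      | 0 => le a b
      | _ => ltA a b \/ (a = b /\ lexle k' s' t')
      end
    | _, _ => False
    end
  end.

Definition mulk (s t : seq A) : seq A := [seq mul x.1 x.2 | x <- zip s t].

Definition resk (s t : seq A) : seq A := [seq res x.1 x.2 | x <- zip s t].

(* g = min {i in 1..k | P i}, or k+1 if the set is empty *)
Definition is_min_index (P : nat -> Prop) (k g : nat) : Prop :=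
  [/\ 1 <= g <= k.+1, (forall i, 1 <= i < g -> ~ P i) & (g <= k -> P g)].

(* 1-based component access a_i *)
Definition comp (s : seq A) (i : nat) : A := nth bot s i.-1.

Definition is_gamma (k : nat) (a b : seq A) (g : nat) : Prop :=
  is_min_index (fun i => Cnc (res (comp a i) (comp b i))) k g.

Definition is_delta (k : nat) (a b : seq A) (d : nat) : Prop :=
  is_min_index (fun i => ltA (mul (res (comp a i) (comp b i)) (comp b i)) (comp a i)) k d.

End Lex.

(* Main.v *)
Require Import Defs.
From mathcomp Require Import all_boot zify.
From Stdlib Require Import Classical.
Set Implicit Arguments. Unset Strict Implicit. Unset Printing Implicit Defensive.

Lemma Lex_size (A : Type) (mul : A -> A -> A) (bot : A) k : forall s,
  Lex mul bot k s -> size s = k.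
Proof.
  induction k as [|k IH]; intros s H; [destruct H|].
  destruct k as [|k]; [destruct H as [x ->]; reflexivity|].
  destruct H as [[c [t [-> _ Ht]]]|[c [-> _]]]; simpl.
  - by rewrite (IH t Ht).
  - by rewrite size_nseq.
Qed.

Lemma Lex_nseq (A : Type) (mul : A -> A -> A) (bot : A) m :
  Lex mul bot m.+1 (nseq m.+1 bot).
Proof.
  induction m as [|m IH]; [exists bot; reflexivity|].
  destruct (classic (Icanc mul bot)) as [Hb|Hb].
  - left. exists bot, (nseq m.+1 bot). split; auto.
  - right. exists bot. split; auto.
Qed.

Lemma Lex_cons (A : Type) (mul : A -> A -> A) (bot : A) k s :
  Lex mul bot k.+2 s -> exists x t, s = x :: t /\ Lex mul bot k.+1 t.
Proof.
  intros [[c [t [-> _ Ht]]]|[c [-> _]]]; do 2 eexists; split; eauto.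
  apply Lex_nseq.
Qed.

Lemma Lex_C (A : Type) (mul : A -> A -> A) (bot : A) k x s :
  Lex mul bot k.+2 (x :: s) -> Cnc mul x -> s = nseq k.+1 bot.
Proof.
  intros [[c [t [E Hc Ht]]]|[c [E Hc]]] HC; injection E; intros; subst; auto.
  contradiction.
Qed.

Lemma lexle_refl (A : Type) (le : A -> A -> Prop) (refl : forall x, le x x) m :
  forall s, size s = m.+1 -> lexle le m.+1 s s.
Proof.
  induction m as [|m IH]; intros [|x s] Hs; try discriminate.
  - simpl. apply refl.
  - simpl. right. split; auto. apply IH. simpl in Hs. lia.
Qed.

Lemma lexle_bot (A : Type) (le : A -> A -> Prop) (bot : A) (Hb : is_bottom le bot) m :
  forall s, size s = m.+1 -> lexle le m.+1 (nseq m.+1 bot) s.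
Proof.
  induction m as [|m IH]; intros [|x s] Hs; try discriminate.
  - simpl. apply Hb.
  - simpl. destruct (classic (bot = x)) as [E|E].
    + right. split; auto. apply IH. simpl in Hs. lia.
    + left. unfold ltA. split; auto.
Qed.

Lemma mulk_nseq_l (A : Type) (mul : A -> A -> A) (bot : A)
  (H : forall x, mul bot x = bot) m : forall s, size s = m ->
  mulk mul (nseq m bot) s = nseq m bot.
Proof.
  induction m as [|m IH]; intros [|x s] Hs; try discriminate; auto.
  change (mul bot x :: mulk mul (nseq m bot) s = bot :: nseq m bot).
  rewrite H IH; auto.
Qed.

Lemma mulk_nseq_r (A : Type) (mul : A -> A -> A) (bot : A)
  (H : forall x, mul x bot = bot) m : forall s, size s = m ->
  mulk mul s (nseq m bot) = nseq m bot.
Proof.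
  induction m as [|m IH]; intros [|x s] Hs; try discriminate; auto.
  change (mul x bot :: mulk mul s (nseq m bot) = bot :: nseq m bot).
  rewrite H IH; auto.
Qed.

Lemma min_tail (P Q : nat -> Prop) k g :
  is_min_index P k.+1 g.+2 -> (forall i, P i.+2 <-> Q i.+1) ->
  is_min_index Q k g.+1.
Proof.
  intros [H1 H2 H3] HPQ. split.
  - lia.
  - intros [|i] Hi; [lia|]. rewrite <- HPQ. apply H2. lia.
  - intros Hg. apply HPQ. apply H3. lia.
Qed.

Lemma min_first (P : nat -> Prop) k g :
  is_min_index P k.+1 g -> (g = 1 /\ P 1) \/ (1 < g /\ ~ P 1).
Proof.
  intros [H1 H2 H3]. destruct g as [|g]; [lia|].
  destruct g as [|g].
  - left. split; [reflexivity|]. apply H3. lia.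
  - right. split; [lia|]. apply H2. lia.
Qed.

Lemma lexle_cons (A : Type) (le : A -> A -> Prop) k x s y t :
  lexle le k.+2 (x :: s) (y :: t) <-> (ltA le x y \/ (x = y /\ lexle le k.+1 s t)).
Proof. reflexivity. Qed.
Lemma mulk_cons (A : Type) (mul : A -> A -> A) x s y t :
  mulk mul (x :: s) (y :: t) = mul x y :: mulk mul s t.
Proof. reflexivity. Qed.
Lemma resk_cons (A : Type) (mul : A -> A -> A) x s y t :
  resk mul (x :: s) (y :: t) = mul x y :: resk mul s t.
Proof. reflexivity. Qed.

Lemma main (A : Type) (le : A -> A -> Prop) (mul res : A -> A -> A)
  (one bot : A) (HR : is_rpom le mul res one) (Hb : is_bottom le bot) k :
  forall a b c g d, Lex mul bot k.+1 a -> Lex mul bot k.+1 b -> Lex mul bot k.+1 c ->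
  is_gamma mul res bot k.+1 a b g -> is_delta le mul res bot k.+1 a b d ->
  (d = g /\ g <= k.+1) \/ g < d ->
  (lexle le k.+1 (mulk mul b c) a <->
   lexle le k.+1 c (take g (resk res a b) ++ nseq (k.+1 - g) bot)).
Proof.
  destruct HR as (Hrefl & Hanti & Htrans & Hassoc & Hcomm & Hone & Hres).
  assert (Hmono : forall b c c', le c c' -> le (mul b c) (mul b c')).
  { intros b c c' H. apply Hres. apply Htrans with c'; auto. apply Hres. apply Hrefl. }
  assert (Hmb : forall x, mul x bot = bot).
  { intros x. apply Hanti; [|apply Hb]. apply Hres. apply Hb. }
  assert (Hbm : forall x, mul bot x = bot).
  { intros x. rewrite Hcomm. apply Hmb. }
  assert (Hle_r : forall a b, le (mul (res a b) b) a).
  { intros a0 b0. rewrite Hcomm. apply Hres. apply Hrefl. }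
  induction k as [|k IH]; intros a b c g d Ha Hb' Hc Hg Hd Hgd.
  - destruct Ha as [a1 ->]. destruct Hb' as [b1 ->]. destruct Hc as [c1 ->].
    destruct Hg as [Hg1 _ _].
    destruct g as [|[|[|g]]]; try lia; simpl; apply Hres.
  - destruct (Lex_cons Ha) as [a1 [a' [-> Ha']]].
    destruct (Lex_cons Hb') as [b1 [b' [-> Hb'']]].
    destruct (Lex_cons Hc) as [c1 [c' [-> Hc']]].
    pose proof (Lex_size Ha') as Sa. pose proof (Lex_size Hb'') as Sb.
    pose proof (Lex_size Hc') as Sc.
    set (r1 := res a1 b1).
    assert (HR1 : le (mul b1 c1) a1 <-> le c1 r1) by apply Hres.
    assert (F1 : le c1 r1 -> c1 <> r1 -> mul r1 b1 = a1 ->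
      ltA le (mul b1 c1) a1 \/ (mul b1 c1 = a1 /\ lexle le k.+1 (mulk mul b' c') a')).
    { intros H1 H2 Heq. apply HR1 in H1.
      destruct (classic (mul b1 c1 = a1)) as [E|E]; [|left; split; auto].
      destruct (classic (Icanc mul b1)) as [Ib|Ib].
      - exfalso. apply H2. apply Ib. rewrite (Hcomm c1) E Heq. reflexivity.
      - right. split; auto. rewrite (Lex_C Hb' Ib) mulk_nseq_l; auto.
        apply lexle_bot; auto. }
    assert (HeqD : ~ ltA le (mul r1 b1) a1 -> mul r1 b1 = a1).
    { intros H. apply NNPP. intros E. apply H. split; auto. apply Hle_r. }
    destruct (min_first Hg) as [[Eg Cg] | [Lg Cg]];
    destruct (min_first Hd) as [[Ed Cd] | [Ld Cd]];
    unfold Defs.comp in Cg, Cd; simpl in Cg, Cd; fold r1 in Cg, Cd.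
    +
      subst g d.
      rewrite mulk_cons resk_cons take_cons take0 cat_cons cat0s subSS subn0 !lexle_cons.
      fold r1. split.
      * intros H. assert (Hc1 : le c1 r1).
        { apply HR1. destruct H as [[H _]|[H _]]; [exact H| rewrite H; apply Hrefl]. }
        destruct (classic (c1 = r1)) as [E|E].
        -- right. split; auto. rewrite (Lex_C Hc); [|rewrite E; exact Cg].
           apply lexle_refl; auto. apply size_nseq.
        -- left. split; auto.
      * intros [[H1 H2]|[E H]].
        -- assert (H3 : le (mul b1 c1) a1) by (apply HR1; exact H1).
           destruct (classic (mul b1 c1 = a1)) as [E|E]; [|left; split; auto].
           exfalso. destruct Cd as [Cd1 Cd2]. apply Cd2. apply Hanti; auto.
           rewrite <- E at 1. rewrite (Hcomm r1). apply Hmono. exact H1.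
        -- left. subst c1. rewrite Hcomm. exact Cd.
    + subst g. assert (Heq := HeqD Cd).
      rewrite mulk_cons resk_cons take_cons take0 cat_cons cat0s subSS subn0 !lexle_cons.
      fold r1. split.
      * intros H. assert (Hc1 : le c1 r1).
        { apply HR1. destruct H as [[H _]|[H _]]; [exact H| rewrite H; apply Hrefl]. }
        destruct (classic (c1 = r1)) as [E|E].
        -- right. split; auto. rewrite (Lex_C Hc); [|rewrite E; exact Cg].
           apply lexle_refl; auto. apply size_nseq.
        -- left. split; auto.
      * intros [[H1 H2]|[E H]].
        -- apply F1; auto.
        -- right. subst c1. split; [rewrite Hcomm; exact Heq|].
           rewrite (Lex_C Hc Cg) mulk_nseq_r; auto. apply lexle_bot; auto.
    + lia.
    + destruct g as [|[|g']]; try lia. destruct d as [|[|d']]; try lia.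
      assert (IH' := IH a' b' c' g'.+1 d'.+1 Ha' Hb'' Hc').
      assert (Heq := HeqD Cd).
      assert (Ir : Icanc mul r1) by (apply NNPP; exact Cg).
      assert (IH'' : lexle le k.+1 (mulk mul b' c') a' <->
        lexle le k.+1 c' (take g'.+1 (resk res a' b') ++ nseq (k.+1 - g'.+1) bot)).
      { apply IH'.
        - eapply min_tail; [exact Hg|]. intros i. apply iff_refl.
        - eapply min_tail; [exact Hd|]. intros i. apply iff_refl.
        - lia. }
      rewrite mulk_cons resk_cons take_cons cat_cons subSS !lexle_cons.
      fold r1. split.
      * intros [[H1 H2]|[E H]].
        -- assert (Hc1 : le c1 r1) by (apply HR1; exact H1).
           left. split; auto. intros E. apply H2. rewrite E Hcomm. exact Heq.
        -- assert (Hc1 : le c1 r1) by (apply HR1; rewrite E; apply Hrefl).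
           destruct (classic (c1 = r1)) as [E'|E'].
           ++ right. split; auto. apply IH''. exact H.
           ++ left. split; auto.
      * intros [[H1 H2]|[E H]].
        -- apply F1; auto.
        -- right. subst c1. split; [rewrite Hcomm; exact Heq|]. apply IH''. exact H.
Qed.

Lemma Lex_r (A : Type) (mul res : A -> A -> A) (bot : A) k :
  forall a b g, Lex mul bot k.+1 a -> Lex mul bot k.+1 b ->
  is_gamma mul res bot k.+1 a b g ->
  Lex mul bot k.+1 (take g (resk res a b) ++ nseq (k.+1 - g) bot).
Proof.
  induction k as [|k IH]; intros a b g Ha Hb Hg.
  - destruct Ha as [a1 ->]. destruct Hb as [b1 ->].
    destruct Hg as [Hg1 _ _].
    destruct g as [|[|[|g]]]; try lia; simpl; eexists; reflexivity.
  - destruct (Lex_cons Ha) as [a1 [a' [-> Ha']]].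
    destruct (Lex_cons Hb) as [b1 [b' [-> Hb']]].
    destruct (min_first Hg) as [[Eg Cg] | [Lg Cg]];
    unfold Defs.comp in Cg; simpl in Cg.
    + subst g. rewrite resk_cons take_cons take0 cat_cons cat0s subSS subn0.
      right. exists (res a1 b1). split; auto.
    + destruct g as [|[|g']]; try lia.
      rewrite resk_cons take_cons cat_cons subSS.
      left. exists (res a1 b1), (take g'.+1 (resk res a' b') ++ nseq (k.+1 - g'.+1) bot).
      split; auto.
      * apply NNPP; exact Cg.
      * apply IH; auto. eapply min_tail; [exact Hg|]. intros i. apply iff_refl.
Qed.

Theorem proposition4 (A : Type) (le : A -> A -> Prop) (mul res : A -> A -> A)
  (one bot : A) :
  is_rpom le mul res one -> is_bottom le bot ->
  forall (k : nat), 1 <= k ->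
  forall (a b : seq A), Lex mul bot k a -> Lex mul bot k b ->
  forall (g d : nat), is_gamma mul res bot k a b g -> is_delta le mul res bot k a b d ->
  (d = g /\ g <= k) \/ g < d ->
  let r := take g (resk res a b) ++ nseq (k - g) bot in
  Lex mul bot k r /\
  (forall c : seq A, Lex mul bot k c ->
     (lexle le k (mulk mul b c) a <-> lexle le k c r)).
Proof.
  intros HR Hb k Hk a b Ha Hb' g d Hg Hd Hgd r.
  destruct k as [|k]; [lia|].
  split.
  - apply (Lex_r Ha Hb' Hg).
  - intros c Hc. apply (main HR Hb Ha Hb' Hc Hg Hd Hgd).
Qed.
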